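(* Let $X$ be a topological space and $n\ge1$ an integer. There exists at most one partition $X=\Gamma_1\sqcup\Gamma_2$ with the following properties: (i) $\Gamma_1$ is open in $X$ and there is a homeomorphism $\psi_1\colon\mathbb R^\times\to\Gamma_1$; (ii) there is a homeomorphism $\psi_2\colon\mathbb R^{2n}\to\Gamma_2$; (iii) for every subset $A\subseteq\mathbb R^\times$ the following are equivalent: $0$ is an accumulation point of $A$; $\Gamma_2\cap\overline{\psi_1(A)}\ne\emptyset$; $\Gamma_2\subseteq\overline{\psi_1(A)}$. Moreover, for such a partition, $\Gamma_2$ is the unique maximal element of the partially ordered set $\mathrm{Cl}_H(X)$.
   Context: $\mathbb R^\times=\mathbb R\setminus\{0\}$. $\mathrm{Cl}_H(X)$ denotes the set of all closed subsets of $X$ that are connected and Hausdorff in the relative topology, partially ordered by inclusion. Subspaces $\Gamma_1,\Gamma_2$ carry the relative topology. *)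

(* Defs.v *)
From HB Require Import structures.
From mathcomp Require Import all_boot all_order all_algebra.
From mathcomp Require Import all_classical all_reals all_analysis.
Set Implicit Arguments. Unset Strict Implicit. Unset Printing Implicit Defensive.
Import Order.TTheory GRing.Theory Num.Theory.
Import numFieldNormedType.Exports.
Local Open Scope classical_set_scope.
Local Open Scope ring_scope.

Definition homeo_onto (S T : topologicalType) (A : set S) (B : set T)
  (f : S -> T) : Prop :=
  [/\ f @` A = B, {within A, continuous f} &
      exists g : T -> S,
        [/\ (forall x, A x -> g (f x) = x), g @` B `<=` A &
            {within B, continuous g}]].

Definition rel_hausdorff (T : topologicalType) (A : set T) : Prop :=
  forall x y, A x -> A y -> x != y ->
    exists U V, [/\ open U, open V, U x, V y & U `&` V `&` A = set0].

Definition ClH (T : topologicalType) : set (set T) :=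
  [set C | [/\ closed C, connected C & rel_hausdorff C]].

Definition maximal_in (T : Type) (F : set (set T)) (M : set T) : Prop :=
  F M /\ (forall C, F C -> M `<=` C -> C = M).

Definition unique_maximal_in (T : Type) (F : set (set T)) (M : set T) : Prop :=
  maximal_in F M /\ (forall M', maximal_in F M' -> M' = M).

Definition Rnz (R : realType) : set R := [set x | x != 0].

Definition good_partition (R : realType) (n : nat) (X : topologicalType)
  (G1 G2 : set X) : Prop :=
  [/\ G1 `&` G2 = set0, G1 `|` G2 = setT,
      open G1 /\ (exists psi1 : R -> X, homeo_onto (@Rnz R) G1 psi1 /\
        forall A : set R, A `<=` @Rnz R ->
          [/\ (limit_point A 0 -> G2 `&` closure (psi1 @` A) !=set0),
              (G2 `&` closure (psi1 @` A) !=set0 -> G2 `<=` closure (psi1 @` A))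
            & (G2 `<=` closure (psi1 @` A) -> limit_point A 0)]) &
      exists psi2 : 'rV[R]_(2 * n) -> X, homeo_onto setT G2 psi2].

(* Main.v *)
Require Import Defs.
From HB Require Import structures.
From mathcomp Require Import all_boot all_order all_algebra.
From mathcomp Require Import all_classical all_reals all_analysis.
From mathcomp Require Import lra.
Import Order.TTheory GRing.Theory Num.Theory.
Import numFieldNormedType.Exports.
Local Open Scope classical_set_scope.
Local Open Scope ring_scope.

Lemma within_contP (S T : topologicalType) (B : set T) (g : T -> S) :
  {within B, continuous g} -> forall p, B p -> forall N, nbhs (g p) N ->
  exists W, nbhs p W /\ forall z, B z -> W z -> N (g z).
Proof.
move=> /subspace_continuousP cg p Bp N Np.
have := cg p Bp N Np.
move=> H; exists [set z | B z -> N (g z)]; split => //.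
by move=> z Bz /(_ Bz).
Qed.

Lemma homeo_haus (S T : topologicalType) (A : set S) (B : set T) f :
  hausdorff_space S -> homeo_onto A B f -> rel_hausdorff B.
Proof.
move=> hS [imf _ [g [gK _ cg]]] x y Bx By xy.
have gxy : g x != g y.
  apply: contra xy => /eqP.
  move: Bx By; rewrite -imf => -[a Aa <-] [b Ab <-].
  by rewrite !gK // => ->.
move: hS; rewrite open_hausdorff => /(_ _ _ gxy) [[P Q] /= [Px Qy] [oP oQ PQ]].
have [W1 [W1x HW1]] := @within_contP _ _ _ _ cg _ Bx P (open_nbhs_nbhs (conj oP (set_mem Px))).
have [W2 [W2y HW2]] := @within_contP _ _ _ _ cg _ By Q (open_nbhs_nbhs (conj oQ (set_mem Qy))).
exists (interior W1), (interior W2); split => //; try exact: open_interior.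
apply/seteqP; split => // z [[/interior_subset W1z /interior_subset W2z] Bz].
move/eqP: PQ => PQ.
have : (P `&` Q) (g z) by split; [exact: HW1|exact: HW2].
by rewrite PQ.
Qed.

Lemma rel_haus_sub (T : topologicalType) (A B : set T) :
  A `<=` B -> rel_hausdorff B -> rel_hausdorff A.
Proof.
move=> AB hB x y Ax Ay xy.
have [U [V [oU oV Ux Vy UV]]] := hB x y (AB _ Ax) (AB _ Ay) xy.
exists U, V; split => //; apply/seteqP; split => // z [[Uz Vz] Az].
by rewrite -UV; split => //; exact: AB.
Qed.

Lemma limit_pointU (T : topologicalType) (A B : set T) t :
  limit_point (A `|` B) t -> limit_point A t \/ limit_point B t.
Proof.
move=> H; apply: contrapT => /not_orP [/existsNP [U /not_implyP [nU HU]]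
  /existsNP [V /not_implyP [nV HV]]].
have [y [yt [Ay|By] [Uy Vy]]] := H _ (filterI nU nV).
  by apply: HU; exists y.
by apply: HV; exists y.
Qed.

Lemma rV_connected (R : realType) (m : nat) : connected [set: 'rV[R]_m].
Proof.
have -> : [set: 'rV[R]_m] = \bigcup_(v in setT) ((fun k : R => k *: v) @` setT).
  apply/seteqP; split => // v _; exists v => //; exists 1 => //.
  by rewrite scale1r.
apply: bigcup_connected.
  by exists 0 => v _; exists 0 => //; rewrite scale0r.
move=> v _; apply: connected_continuous_connected.
  by apply/connected_intervalP.
by apply: continuous_subspaceT; exact: scalel_continuous.
Qed.

Lemma pick_seg (R : realType) (t e : R) : t != 0 -> 0 < e ->
  exists a b c : R, [/\ a <= t <= b, a <= c <= b, 0 < a \/ b < 0 & `|c| < e].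
Proof.
move=> t0 e0; have [tp|tn] := ltP 0 t.
  have [h|h] := ltP (e/2) t.
    exists (e/2), t, (e/2); split; [lra|lra|left; lra|].
    by rewrite ger0_norm; lra.
  exists t, t, t; split; [lra|lra|left; lra|].
  by rewrite gtr0_norm //; lra.
have tn' : t < 0 by rewrite lt_neqAle t0 tn.
have [h|h] := ltP t (- (e/2)).
  exists t, (- (e/2)), (- (e/2)); split; [lra|lra|right; lra|].
  by rewrite ler0_norm; lra.
exists t, t, t; split; [lra|lra|right; lra|].
by rewrite ltr0_norm //; lra.
Qed.

Lemma seg_Rnz (R : realType) (a b : R) : 0 < a \/ b < 0 -> `[a, b] `<=` @Rnz R.
Proof.
move=> h s /=; rewrite in_itv /= => /andP [hs1 hs2]; rewrite /Rnz /=.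
by case: h => h; apply/negP => /eqP s0; move: hs1 hs2; rewrite s0; lra.
Qed.

Section Main.
Variables (R : realType) (X : topologicalType) (G1 G2 : set X)
  (psi1 : R -> X) (g1 : X -> R).
Hypotheses (disj : G1 `&` G2 = set0) (cov : G1 `|` G2 = setT)
  (im1 : psi1 @` (@Rnz R) = G1) (gK : forall x, Rnz x -> g1 (psi1 x) = x)
  (cg : {within G1, continuous g1}) (oG1 : open G1)
  (c1 : {within @Rnz R, continuous psi1}) (hG1 : rel_hausdorff G1) (G2cl : ClH G2)
  (iii : forall A : set R, A `<=` @Rnz R ->
          [/\ (limit_point A 0 -> G2 `&` closure (psi1 @` A) !=set0),
              (G2 `&` closure (psi1 @` A) !=set0 -> G2 `<=` closure (psi1 @` A))
            & (G2 `<=` closure (psi1 @` A) -> limit_point A 0)])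
  (x0 y0 : X) (x0G : G2 x0) (y0G : G2 y0) (xy0 : x0 != y0).

Lemma meets_limit (A : set R) : A `<=` @Rnz R ->
  G2 `&` closure (psi1 @` A) !=set0 -> limit_point A 0.
Proof. by move=> AR H; have [_ h2 h3] := iii _ AR; exact/h3/h2. Qed.

Lemma G1orG2 z : G1 z \/ G2 z.
Proof. by have : (G1 `|` G2) z by rewrite cov. Qed.

Lemma notG1G2 z : G1 z -> G2 z -> False.
Proof. by move=> a b; have : (G1 `&` G2) z by []; rewrite disj. Qed.

Lemma closed_img (I : set R) : closed I -> I `<=` @Rnz R -> closed (psi1 @` I).
Proof.
move=> cI IR p cp.
case: (G1orG2 p) => [G1p|G2p].
  have gI : I (g1 p).
    apply: cI => N Np.
    have [W [Wp HW]] := @within_contP _ _ _ _ cg _ G1p N Np.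
    have [z [[i Ii <-] Wz]] := cp W Wp.
    exists i; split => //; have := HW (psi1 i); rewrite gK; last exact: IR.
    by apply => //; rewrite -im1; exists i => //; exact: IR.
  move: G1p; rewrite -im1 => -[a Ra pa]; exists a => //.
  by move: gI; rewrite -pa gK.
have /subset_limit_point/cI I0 := meets_limit _ IR (ex_intro _ p (conj G2p cp)).
by have := IR _ I0; rewrite /Rnz /= eqxx.
Qed.

Definition preC (C : set X) : set R := [set s | Rnz s /\ C (psi1 s)].

Lemma preC_R C : preC C `<=` @Rnz R.
Proof. by move=> s []. Qed.

Lemma closure_in (C A : set X) : closed C -> A `<=` C -> closure A `<=` C.
Proof. by move=> cC AC z /(closure_subset AC) /cC. Qed.

Lemma key C : ClH C -> ~ limit_point (preC C) 0.
Proof.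
move=> [cC _ hC] lim.
have [h1 h2 _] := iii _ (preC_R C).
have sub := h2 (h1 lim).
have G2C : G2 `<=` C.
  by move=> z /sub; apply: closure_in => // w [s [_ Cs] <-].
have [U [V [oU oV Ux Vy UV]]] := hC _ _ (G2C _ x0G) (G2C _ y0G) xy0.
pose AU := [set s | preC C s /\ U (psi1 s)].
pose AN := [set s | preC C s /\ ~ U (psi1 s)].
have AUN : preC C = AU `|` AN.
  apply/seteqP; split => [s Cs|s [[]|[]]] //.
  by case: (pselect (U (psi1 s))) => ?; [left|right].
have AUR : AU `<=` @Rnz R by move=> s [[]].
have ANR : AN `<=` @Rnz R by move=> s [[]].
move: lim; rewrite AUN => /limit_pointU [lU|lN].
  have [hU1 hU2 _] := iii _ AUR.
  have := hU2 (hU1 lU) _ y0G V (open_nbhs_nbhs (conj oV Vy)).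
  move=> [z [[s [[_ Cs] Us] <-] Vs]].
  have : (U `&` V `&` C) (psi1 s) by [].
  by rewrite UV.
have [hN1 hN2 _] := iii _ ANR.
have := hN2 (hN1 lN) _ x0G U (open_nbhs_nbhs (conj oU Ux)).
by move=> [z [[s [_ NUs] <-] Us]].
Qed.

Lemma dich C : ClH C -> C `<=` G2 \/ (C !=set0 /\ C `<=` G1).
Proof.
move=> ClC; have nl := key _ ClC; case: ClC => cC conC hC.
pose P := C `&` G1.
have PE : P = psi1 @` preC C.
  apply/seteqP; split => [z [Cz G1z]|z [s [Rs Cs] <-]].
    move: G1z; rewrite -im1 => -[s Rs sz]; exists s => //.
    by split => //; rewrite sz.
  by split => //; rewrite -im1; exists s.
case: (pselect (P !=set0)) => [Pne|nP]; last first.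
  left => z Cz; case: (G1orG2 z) => // G1z; exfalso; apply: nP; by exists z.
right.
have cP : closed P.
  move=> q cq.
  have Cq : C q by apply: (closure_in C P cC) => // z [].
  split => //; case: (G1orG2 q) => // G2q; exfalso; apply: nl.
  apply: (meets_limit _ (preC_R C)); exists q; split => //.
  by rewrite -PE.
have PC : P = C.
  apply: conC => //; first by exists G1.
  by exists P => //; rewrite /P setIA setIid.
split; first by case: Pne => z [Cz _]; exists z.
by rewrite -PC => z [].
Qed.

Lemma max2 : maximal_in (@ClH X) G2.
Proof.
split => // C ClC G2C; case: (dich _ ClC) => [CG2|[_ CG1]].
  by apply/seteqP; split.
by exfalso; exact: (notG1G2 _ (CG1 _ (G2C _ x0G)) x0G).
Qed.

Lemma uniq2 M : maximal_in (@ClH X) M -> M = G2.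
Proof.
move=> [ClM maxM]; case: (dich _ ClM) => [MG2|[[x Mx] MG1]].
  by apply/esym/maxM.
exfalso.
have := key _ ClM => /existsNP [U /not_implyP [nU HU]].
move: nU => /nbhs_ballP [e e0 eU].
have := MG1 _ Mx; rewrite -im1 => -[t Rt tx].
have [a [b [c [/andP [hat tb] /andP [ac cb] ab ce]]]] := @pick_seg R t e Rt e0.
pose I : set R := `[a, b]%classic.
have IR : I `<=` @Rnz R by exact: seg_Rnz.
have It : I t by rewrite /I /= in_itv /= hat tb.
have Ic : I c by rewrite /I /= in_itv /= ac cb.
pose D := M `|` psi1 @` I.
have DM : D = M.
  apply: maxM; last by move=> z Mz; left.
  split.
  - apply: closedU; first by case: ClM.
    by apply: closed_img => //; exact: itv_closed.
  - apply: connectedU; first by exists x; split => //; exists t.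
      by case: ClM.
    apply: connected_continuous_connected; first exact: segment_connected.
    exact: continuous_subspaceW IR c1.
  - apply: rel_haus_sub hG1 => z [/MG1 //|[s Is <-]].
    by rewrite -im1; exists s => //; exact: IR.
have Mc : M (psi1 c) by rewrite -DM; right; exists c.
apply: HU; exists c; split.
- exact: (IR _ Ic).
- by split => //; exact: (IR _ Ic).
- by apply: eU; rewrite -ball_normE /= sub0r normrN.
Qed.

End Main.

Theorem lemma2p3 (R : realType) (X : topologicalType) (n : nat) :
  (1 <= n)%N ->
  (forall G1 G2 G1' G2' : set X,
     good_partition R n G1 G2 -> good_partition R n G1' G2' ->
     G1 = G1' /\ G2 = G2') /\
  (forall G1 G2 : set X, good_partition R n G1 G2 ->
     unique_maximal_in (@ClH X) G2).
Proof.
move=> n1.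
have part2 : forall G1 G2 : set X, good_partition R n G1 G2 ->
    unique_maximal_in (@ClH X) G2.
  move=> G1 G2 [disj cov [oG1 [psi1 [h1 iii]]] [psi2 h2]].
  have hG1 : rel_hausdorff G1.
    by apply: (@homeo_haus _ _ _ _ _ _ h1); exact: norm_hausdorff.
  have hG2 : rel_hausdorff G2.
    by apply: (@homeo_haus _ _ _ _ _ _ h2); exact: norm_hausdorff.
  case: h1 => im1 c1 [g1 [gK _ cg]].
  case: h2 => im2 c2 [g2 [g2K _ cg2]].
  have n2 : (0 < 2 * n)%N by rewrite muln_gt0.
  pose v : 'rV[R]_(2 * n) := const_mx 1.
  have x0G : G2 (psi2 0) by rewrite -im2; exists 0.
  have y0G : G2 (psi2 v) by rewrite -im2; exists v.
  have xy0 : psi2 0 != psi2 v.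
    apply/negP => /eqP e; have := congr1 g2 e; rewrite !g2K //.
    move/matrixP => /(_ ord0 (Ordinal n2)); rewrite !mxE => /eqP.
    by rewrite eq_sym oner_eq0.
  have G2E : G2 = ~` G1.
    apply/seteqP; split => z.
      by move=> G2z G1z; have : (G1 `&` G2) z by []; rewrite disj.
    move=> nG1; have : (G1 `|` G2) z by rewrite cov.
    by case => // /nG1.
  have G2cl : ClH G2.
    split => //.
    - by rewrite G2E; exact: open_closedC.
    - rewrite -im2; apply: connected_continuous_connected => //.
      exact: rV_connected.
  split.
    exact: (@max2 _ _ _ _ _ disj cov im1 oG1 G2cl iii _ _ x0G y0G xy0).
  move=> M'.
  exact: (@uniq2 _ _ _ _ _ _ cov im1 gK cg oG1 c1 hG1 G2cl iii _ _ x0G y0G xy0 M').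
split => //.
move=> G1 G2 G1' G2' gp gp'.
have [m1 _] := part2 _ _ gp.
have [_ u2] := part2 _ _ gp'.
have e2 : G2 = G2' by exact: u2.
split => //.
case: gp => d c _ _; case: gp' => d' c' _ _.
have C1 : forall (A B : set X), A `&` B = set0 -> A `|` B = setT -> A = ~` B.
  move=> A B AB AUB; apply/seteqP; split => z.
    by move=> Az Bz; have : (A `&` B) z by []; rewrite AB.
  move=> nB; have : (A `|` B) z by rewrite AUB.
  by case => // /nB.
by rewrite (C1 _ _ d c) (C1 _ _ d' c') e2.
Qed.
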